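(* In the Setting below, let $I$ be an $\mathfrak n$-primary ideal of $S$. Then $$g(I)+1\le \ell_S(S/I)+2\delta.$$
   Context: Setting: $(S,\mathfrak n)$ is a one-dimensional Noetherian local domain, not regular, with infinite residue field $k$ and quotient field $K$; its integral closure $\overline S$ in $K$ is a DVR and a finite $S$-module, with uniformizer $t$, and $S/\mathfrak n\to\overline S/t\overline S$ is an isomorphism. $\mathrm{Val}$ is the valuation of $\overline S$ on $K$ with $\mathrm{Val}(t)=1$. $\delta=\ell_S(\overline S/S)$. $g(I)=\max\{\mathrm{Val}(a)\mid a\in K\setminus I,\ a\neq0\}$. *)

(* Defs.v *)
From mathcomp Require Import all_boot all_order all_algebra.
Set Implicit Arguments. Unset Strict Implicit. Unset Printing Implicit Defensive.
Import Order.TTheory GRing.Theory Num.Theory.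
Local Open Scope ring_scope.

Definition subset (K : Type) (A B : K -> Prop) := forall x, A x -> B x.
Definition strict_subset (K : Type) (A B : K -> Prop) :=
  subset A B /\ exists x, B x /\ ~ A x.

Definition subring (K : fieldType) (S : K -> Prop) :=
  S 1 /\ (forall x y, S x -> S y -> S (x - y)) /\ (forall x y, S x -> S y -> S (x * y)).

Definition submodule (K : fieldType) (S M : K -> Prop) :=
  M 0 /\ (forall x y, M x -> M y -> M (x + y)) /\ (forall s x, S s -> M x -> M (s * x)).

Definition ideal (K : fieldType) (S I : K -> Prop) := submodule S I /\ subset I S.
Definition proper_ideal (K : fieldType) (S I : K -> Prop) := ideal S I /\ ~ I 1.
Definition prime_ideal (K : fieldType) (S P : K -> Prop) :=
  proper_ideal S P /\ forall a b, S a -> S b -> P (a * b) -> P a \/ P b.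
Definition maximal_ideal (K : fieldType) (S M : K -> Prop) :=
  proper_ideal S M /\ forall J, proper_ideal S J -> subset M J -> subset J M.
Definition primary_ideal (K : fieldType) (S I : K -> Prop) :=
  proper_ideal S I /\
  forall x y, S x -> S y -> I (x * y) -> ~ I x -> exists k : nat, I (y ^+ k).
Definition n_primary (K : fieldType) (S n I : K -> Prop) :=
  primary_ideal S I /\ forall x, S x -> ((exists k : nat, I (x ^+ k)) <-> n x).

Definition local_with (K : fieldType) (S n : K -> Prop) :=
  maximal_ideal S n /\ forall m, maximal_ideal S m -> forall x, m x <-> n x.

Definition krull_dim_one (K : fieldType) (S : K -> Prop) :=
  (exists P Q, prime_ideal S P /\ prime_ideal S Q /\ strict_subset P Q) /\
  ~ (exists P Q R, prime_ideal S P /\ prime_ideal S Q /\ prime_ideal S R /\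
        strict_subset P Q /\ strict_subset Q R).

Definition fin_gen (K : fieldType) (S M : K -> Prop) :=
  exists (k : nat) (g : nat -> K), forall x, M x <->
    exists c : nat -> K, (forall i, (i < k)%N -> S (c i)) /\
                         x = \sum_(i < k) c i * g i.

Definition noetherian (K : fieldType) (S : K -> Prop) :=
  forall I, ideal S I -> fin_gen S I.

(* A one-dimensional local Noetherian ring is regular iff its maximal ideal
   is generated by dim S = 1 element. *)
Definition regular_dim_one (K : fieldType) (S n : K -> Prop) :=
  exists x, S x /\ forall y, n y <-> exists s, S s /\ y = s * x.

(* The residue field S/n is infinite: no finite list of elements of S
   represents all classes mod n. *)
Definition infinite_residue (K : fieldType) (S n : K -> Prop) :=
  ~ exists s : seq K, (forall y, y \in s -> S y) /\
      forall x, S x -> exists y, y \in s /\ n (x - y).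

Definition quotient_field (K : fieldType) (S : K -> Prop) :=
  forall x, exists a b, S a /\ S b /\ b != 0 /\ x = a / b.

Definition integral_over (K : fieldType) (S : K -> Prop) (x : K) :=
  exists (k : nat) (a : nat -> K), (0 < k)%N /\ (forall i, S (a i)) /\
    x ^+ k + \sum_(i < k) a i * x ^+ i = 0.

(* v is a (discrete, Z-valued) valuation on K^*; its value at 0 is irrelevant. *)
Definition discrete_valuation (K : fieldType) (v : K -> int) :=
  (forall x y, x != 0 -> y != 0 -> v (x * y) = v x + v y) /\
  (forall x y, x != 0 -> y != 0 -> x + y != 0 -> Num.min (v x) (v y) <= v (x + y)).

(* The natural map S/n -> Sbar/t Sbar is well defined, injective and surjective. *)
Definition residue_iso (K : fieldType) (S n Sbar : K -> Prop) (t : K) :=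
  (forall x, n x -> exists y, Sbar y /\ x = t * y) /\
  (forall x, S x -> (exists y, Sbar y /\ x = t * y) -> n x) /\
  (forall y, Sbar y -> exists s, S s /\ exists z, Sbar z /\ y - s = t * z).

(* Length of the S-module A/B (B subset A submodules of K) via strict chains
   of S-submodules  B = M_0 < M_1 < ... < M_l = A. *)
Definition sub_chain (K : fieldType) (S : K -> Prop) (M : nat -> K -> Prop)
    (B A : K -> Prop) (l : nat) :=
  (forall i, submodule S (M i)) /\ (forall x, M 0%N x <-> B x) /\
  (forall x, M l x <-> A x) /\
  (forall i, (i < l)%N -> strict_subset (M i) (M i.+1)).

Definition has_length (K : fieldType) (S B A : K -> Prop) (l : nat) :=
  (exists M, sub_chain S M B A l) /\
  forall M m, sub_chain S M B A m -> (m <= l)%N.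

(* is_g I v m : m = g(I) = max { v a | a in K \ I, a <> 0 } (the max exists). *)
Definition is_g (K : fieldType) (I : K -> Prop) (v : K -> int) (m : int) :=
  (exists a, a != 0 /\ ~ I a /\ v a = m) /\
  forall a, a != 0 -> ~ I a -> v a <= m.

(* Main.v *)
Require Import Defs.
From mathcomp Require Import all_boot all_order all_algebra.
From mathcomp Require Import zify ring.
From Stdlib Require Import ClassicalEpsilon Classical.
Set Implicit Arguments. Unset Strict Implicit. Unset Printing Implicit Defensive.
Import Order.TTheory GRing.Theory Num.Theory.
Local Open Scope ring_scope.


Lemma sr0 (K : fieldType) (S : K -> Prop) : subring S -> S 0.
Proof. by case=> h1 [hB _]; rewrite -(subrr 1); apply: hB. Qed.

Lemma srN (K : fieldType) (S : K -> Prop) x : subring S -> S x -> S (- x).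
Proof. move=> hS hx; have := sr0 hS; case: hS => _ [hB _] h0.
by rewrite -sub0r; apply: hB. Qed.

Lemma srD (K : fieldType) (S : K -> Prop) x y : subring S -> S x -> S y -> S (x + y).
Proof. move=> hS hx hy; have hny := srN hS hy; case: hS => _ [hB _].
by rewrite -(opprK y); apply: hB. Qed.

Lemma srM (K : fieldType) (S : K -> Prop) x y : subring S -> S x -> S y -> S (x * y).
Proof. by case=> _ [_ hM]; apply: hM. Qed.

Lemma smN (K : fieldType) (S M : K -> Prop) x : subring S -> submodule S M -> M x -> M (- x).
Proof. move=> hS [_ [_ hZ]] hx. rewrite -mulN1r; apply: hZ => //.
apply: srN => //; by case: hS. Qed.

Lemma smB (K : fieldType) (S M : K -> Prop) x y : subring S -> submodule S M -> M x -> M y -> M (x - y).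
Proof. move=> hS hM hx hy; have := smN hS hM hy; case: hM => _ [hD _]; exact: hD. Qed.

Lemma smD (K : fieldType) (S M : K -> Prop) x y : submodule S M -> M x -> M y -> M (x + y).
Proof. by case=> _ [hD _]; apply: hD. Qed.

Lemma smZ (K : fieldType) (S M : K -> Prop) s x : submodule S M -> S s -> M x -> M (s * x).
Proof. by case=> _ [_ hZ]; apply: hZ. Qed.

Lemma sm0 (K : fieldType) (S M : K -> Prop) : submodule S M -> M 0.
Proof. by case. Qed.

Lemma v1 (K : fieldType) (v : K -> int) : discrete_valuation v -> v 1 = 0.
Proof. case=> hM _; have := hM 1 1 (oner_neq0 _) (oner_neq0 _); rewrite mulr1; lia. Qed.

Lemma vM (K : fieldType) (v : K -> int) x y : discrete_valuation v -> x != 0 -> y != 0 ->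
  v (x * y) = v x + v y.
Proof. by case=> hM _; apply: hM. Qed.

Lemma vV (K : fieldType) (v : K -> int) x : discrete_valuation v -> x != 0 -> v x^-1 = - v x.
Proof. move=> hv hx; have := vM hv hx (invr_neq0 hx); rewrite mulfV // v1 //; lia. Qed.

Lemma vN1 (K : fieldType) (v : K -> int) : discrete_valuation v -> v (-1) = 0.
Proof. move=> hv; have h1 : (-1 : K) != 0 by rewrite oppr_eq0 oner_neq0.
have := vM hv h1 h1; rewrite mulrNN mulr1 v1 //; lia. Qed.

Lemma vN (K : fieldType) (v : K -> int) x : discrete_valuation v -> x != 0 -> v (- x) = v x.
Proof. move=> hv hx; have h1 : (-1 : K) != 0 by rewrite oppr_eq0 oner_neq0.
by rewrite -mulN1r vM // vN1 // add0r. Qed.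

Lemma vD (K : fieldType) (v : K -> int) x y : discrete_valuation v -> x != 0 -> y != 0 ->
  x + y != 0 -> Num.min (v x) (v y) <= v (x + y).
Proof. by case=> _ hD; apply: hD. Qed.

Lemma vDge (K : fieldType) (v : K -> int) c x y : discrete_valuation v -> x != 0 -> y != 0 ->
  x + y != 0 -> c <= v x -> c <= v y -> c <= v (x + y).
Proof. move=> hv hx hy hxy h1 h2; have := vD hv hx hy hxy.
rewrite ge_min; case/orP=> h; [exact: le_trans h1 h| exact: le_trans h2 h]. Qed.

Lemma vDlt (K : fieldType) (v : K -> int) x y : discrete_valuation v -> x != 0 -> y != 0 ->
  v x < v y -> x + y != 0 /\ v (x + y) = v x.
Proof.
move=> hv hx hy hlt.
have hxy : x + y != 0.
  apply/negP=> /eqP h; have : x = - y by rewrite -(addrK y x) h sub0r.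
  move=> e; move: hlt; rewrite e vN //; lia.
split=> //.
have h1 := vD hv hx hy hxy.
have hny : - y != 0 by rewrite oppr_eq0.
have e : x = (x + y) + - y by rewrite addrK.
have h2 := vD hv hxy hny; rewrite -e in h2; have {h2} h2 := h2 hx.
rewrite vN // in h2.
move: h1 h2; rewrite !ge_min; case/orP=> h1; case/orP=> h2; lia.
Qed.

Lemma vX (K : fieldType) (v : K -> int) t (n : nat) : discrete_valuation v -> t != 0 -> v t = 1 ->
  v (t ^+ n) = n%:Z.
Proof. move=> hv ht hvt; elim: n => [|n IH]; first by rewrite expr0 v1.
rewrite exprS vM // ?expf_neq0 // IH hvt; lia. Qed.
Definition Vg (K : fieldType) (v : K -> int) (c : int) (x : K) := x = 0 \/ c <= v x.

Record setting (K : fieldType) (S : K -> Prop) (v : K -> int) (t : K) := {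
  s_ring : subring S;
  s_val : discrete_valuation v;
  s_t : t != 0;
  s_vt : v t = 1;
  s_Sv : forall s, S s -> Vg v 0 s;
  s_res : forall y, Vg v 0 y -> exists s, S s /\ exists z, Vg v 0 z /\ y - s = t * z }.

Lemma Vg_sub (K : fieldType) (S : K -> Prop) v t c : setting S v t -> submodule S (Vg v c).
Proof.
move=> H; have hv := s_val H; split; first by left.
split.
  move=> x y [->|hx]; first by rewrite add0r.
  move=> [->|hy]; first by rewrite addr0; right.
  have [->|x0] := eqVneq x 0; first by rewrite add0r; right.
  have [->|y0] := eqVneq y 0; first by rewrite addr0; right.
  have [e|xy0] := eqVneq (x + y) 0; first by left.
  by right; apply: vDge.
move=> s x hs [->|hx]; first by rewrite mulr0; left.
have [->|s0] := eqVneq s 0; first by rewrite mul0r; left.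
have [->|x0] := eqVneq x 0; first by rewrite mulr0; left.
right; rewrite vM //; case: (s_Sv H hs) => [e|hs0]; first by rewrite e eqxx in s0.
lia.
Qed.

Lemma res_approx (K : fieldType) (S : K -> Prop) v t x y : setting S v t ->
  x != 0 -> y != 0 -> v x = v y ->
  exists s, S s /\ (x - s * y = 0 \/ v x < v (x - s * y)).
Proof.
move=> H x0 y0 exy; have hv := s_val H.
have hu : Vg v 0 (x / y) by right; rewrite vM ?invr_neq0 // vV // exy; lia.
have [s [hs [z [hz e]]]] := s_res H hu.
exists s; split => //.
have e2 : x - s * y = t * z * y by rewrite -e mulrBl divfK.
rewrite e2; have [->|z0] := eqVneq z 0; first by rewrite mulr0 mul0r; left.
right; rewrite !vM ?mulf_neq0 ?(s_t H) // (s_vt H) exy.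
case: hz => [e3|hz]; first by rewrite e3 eqxx in z0.
lia.
Qed.

Lemma approx (K : fieldType) (S : K -> Prop) v t (M Q : K -> Prop) (b : nat) :
  setting S v t -> submodule S M ->
  (forall x, x != 0 -> b%:Z <= v x -> M x) ->
  (forall x y s, Q x -> M y -> S s -> x != 0 -> y != 0 -> v y = v x ->
     (x - s * y = 0 \/ v x < v (x - s * y)) -> Q (x - s * y)) ->
  (forall x, Q x -> x != 0 -> v x < b%:Z -> exists y, M y /\ y != 0 /\ v y = v x) ->
  (forall x, Q x -> x != 0 -> 0 <= v x) ->
  forall x, Q x -> M x.
Proof.
move=> H hM hb hcl hval hpos.
have hS := s_ring H.
suff main : forall k : nat, forall x, Q x -> x != 0 -> b%:Z <= v x + k%:Z -> M x.
  move=> x hx; have [->|x0] := eqVneq x 0; first exact: sm0 hM.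
  apply: (main b) => //; have := hpos x hx x0; lia.
elim=> [|k IH] x hx x0 hk; first by apply: hb => //; lia.
have [hge|hlt] := leP b%:Z (v x); first exact: hb.
have [y [hy [y0 ey]]] := hval x hx x0 hlt.
have [s [hs hr]] := res_approx H x0 y0 (esym ey).
have hz := hcl x y s hx hy hs x0 y0 ey hr.
have e : x = (x - s * y) + s * y by rewrite subrK.
rewrite e; apply: (smD hM); last exact: smZ hM hs hy.
have [->|z0] := eqVneq (x - s * y) 0; first exact: sm0 hM.
case: hr => [e0|hr]; first by rewrite e0 eqxx in z0.
apply: IH => //. move: hk hr. set a := v x. set c := v (x - s * y). move=> hk hr. rewrite -addn1 PoszD in hk. lia.
Qed.
Definition pb (P : Prop) : bool := if excluded_middle_informative P then true else false.
Lemma pbP (P : Prop) : reflect P (pb P).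
Proof. rewrite /pb; case: excluded_middle_informative => h; by constructor. Qed.

Definition vals (K : fieldType) (v : K -> int) (M : K -> Prop) (u : int) :=
  exists y, M y /\ y != 0 /\ v y = u.
Definition setv (K : fieldType) (b : nat) (v : K -> int) (M : K -> Prop) : {set 'I_b} :=
  [set w : 'I_b | pb (vals v M (nat_of_ord w)%:Z)].

Lemma in_setv (K : fieldType) (b : nat) (v : K -> int) (M : K -> Prop) (w : 'I_b) :
  (w \in setv b v M) <-> vals v M (nat_of_ord w)%:Z.
Proof. by rewrite inE; split => /pbP. Qed.

Lemma setv_sub (K : fieldType) (b : nat) (v : K -> int) (M M' : K -> Prop) :
  (forall x, M x -> M' x) -> setv b v M \subset setv b v M'.
Proof.
move=> h; apply/subsetP=> w /in_setv [y [hy [y0 ey]]]; apply/in_setv.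
by exists y; split; [apply: h|].
Qed.

Lemma same_vals (K : fieldType) (S : K -> Prop) v t (b : nat) (M M' : K -> Prop) :
  setting S v t -> submodule S M -> submodule S M' -> (forall x, M x -> M' x) ->
  (forall x, x != 0 -> b%:Z <= v x -> M x) -> (forall x, M' x -> Vg v 0 x) ->
  setv b v M' \subset setv b v M -> forall x, M' x -> M x.
Proof.
move=> H hM hM' hsub hb hpos hsv.
have hS := s_ring H.
apply: (approx H hM hb).
- move=> x y s hx hy hs _ _ _ _; apply: (smB hS hM') => //; apply: smZ hM' hs _; exact: hsub.
- move=> x hx x0 hlt.
  have hp : 0 <= v x by case: (hpos x hx) => // e; rewrite e eqxx in x0.
  have hw : (`|v x|%N < b)%N by move: hlt hp; lia.
  have hin : (Ordinal hw) \in setv b v M'.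
    apply/in_setv; exists x; split => //; split => //=; lia.
  move/subsetP: hsv => /(_ _ hin) /in_setv [y [hy [y0 ey]]].
  exists y; split => //; split => //; rewrite ey /=; lia.
- move=> x hx x0; by case: (hpos x hx) => // e; rewrite e eqxx in x0.
Qed.

Lemma chain_bound (K : fieldType) (S : K -> Prop) v t (b : nat) (B A : K -> Prop) Ms m :
  setting S v t -> (forall x, x != 0 -> b%:Z <= v x -> B x) ->
  (forall x, A x -> Vg v 0 x) -> sub_chain S Ms B A m ->
  (#|setv b v B| + m <= #|setv b v A|)%N.
Proof.
move=> H hb hA [hsm [h0 [hl hst]]].
have hS := s_ring H.
have hMA : forall j i, (i + j = m)%N -> forall x, Ms i x -> A x.
  elim=> [|j IH] i e x hx; first by apply/hl; rewrite -e addn0.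
  have hi : (i < m)%N by rewrite -e; lia.
  apply: (IH i.+1); first by rewrite -e; lia.
  by case: (hst i hi) => hs _; apply: hs.
have hBM : forall i x, (i <= m)%N -> B x -> Ms i x.
  elim=> [|i IH] x him hx; first by apply/h0.
  by case: (hst i him) => hs _; apply: hs; apply: IH => //; lia.
have hst2 : forall i, (i < m)%N -> setv b v (Ms i) \proper setv b v (Ms i.+1).
  move=> i him; case: (hst i him) => hs [x [hx1 hx2]].
  rewrite properE; apply/andP; split; first exact: setv_sub.
  apply/negP=> hsv; apply: hx2.
  apply: (same_vals H (hsm i) (hsm i.+1) hs _ _ hsv) => //.
  - by move=> y y0 hy; apply: hBM; [lia| apply: hb].
  - by move=> y hy; apply: hA; apply: (hMA (m - i.+1)%N i.+1) => //; lia.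
have hcard : forall i, (i <= m)%N -> (#|setv b v B| + i <= #|setv b v (Ms i)|)%N.
  elim=> [|i IH] him.
    rewrite addn0; apply: subset_leq_card; apply: setv_sub => x hx; exact/h0.
  have := proper_card (hst2 i him); have := IH (ltnW him); lia.
apply: leq_trans (hcard m (leqnn m)) _.
apply: subset_leq_card; apply: setv_sub => x; exact: (proj1 (hl x)).
Qed.
Lemma vals_setv (K : fieldType) (b : nat) (v : K -> int) (M : K -> Prop) x :
  M x -> x != 0 -> 0 <= v x -> v x < b%:Z -> exists w : 'I_b, w \in setv b v M /\ (nat_of_ord w)%:Z = v x.
Proof.
move=> hx x0 h1 h2.
have hw : (`|v x|%N < b)%N by move: h1 h2; lia.
exists (Ordinal hw); split; last by rewrite /=; lia.
apply/in_setv; exists x; split => //; split => //=; lia.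
Qed.

Lemma chain_exists (K : fieldType) (S : K -> Prop) v t (b : nat) (B : K -> Prop) :
  setting S v t -> submodule S B -> (forall x, x != 0 -> b%:Z <= v x -> B x) ->
  forall n (A : K -> Prop), submodule S A -> (forall x, B x -> A x) ->
  (forall x, A x -> Vg v 0 x) -> #|setv b v A| = (#|setv b v B| + n)%N ->
  exists Ms, sub_chain S Ms B A n.
Proof.
move=> H hB hb; have hS := s_ring H; have hv := s_val H.
elim=> [|n IH] A hA hBA hApos hc.
  have hAB : forall x, A x -> B x.
    apply: (same_vals H hB hA hBA hb hApos).
    have : setv b v B == setv b v A by rewrite eqEcard (setv_sub b v hBA) hc addn0 leqnn.
    by move/eqP=> ->; apply: subxx.
  exists (fun _ => B); split => //; split => //; split => //.
  by move=> x; split; [apply: hBA| apply: hAB].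
have : setv b v B \proper setv b v A by rewrite properEcard setv_sub // hc; lia.
case/properP=> _ [w0 hw0A hw0B].
pose P := [pred u : 'I_b | (u \in setv b v A) && (u \notin setv b v B)].
have P0 : P w0 by rewrite /= hw0A.
case: (arg_minnP (fun u : 'I_b => nat_of_ord u) P0) => w /andP [hwA hwB] hwmin.
pose A' := fun x => exists y z, B y /\ A z /\ Vg v (nat_of_ord w).+1%:Z z /\ x = y + z.
have hVs := Vg_sub (nat_of_ord w).+1%:Z H.
have hA' : submodule S A'.
  split; first by exists 0, 0; split; [exact: sm0 hB| split; [exact: sm0 hA| split; [left| rewrite addr0]]].
  split.
    move=> x1 x2 [y1 [z1 [hy1 [hz1 [hv1 ->]]]]] [y2 [z2 [hy2 [hz2 [hv2 ->]]]]].
    exists (y1 + y2), (z1 + z2); split; first exact: smD hB hy1 hy2.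
    split; first exact: smD hA hz1 hz2.
    split; first exact: smD hVs hv1 hv2.
    by rewrite addrACA.
  move=> s x hs [y [z [hy [hz [hvz ->]]]]].
  exists (s * y), (s * z); split; first exact: smZ hB hs hy.
  split; first exact: smZ hA hs hz.
  split; first exact: smZ hVs hs hvz.
  by rewrite mulrDr.
have hBA' : forall x, B x -> A' x.
  by move=> x hx; exists x, 0; split => //; split; [exact: sm0 hA| split; [left| rewrite addr0]].
have hA'A : forall x, A' x -> A x.
  by move=> x [y [z [hy [hz [_ ->]]]]]; apply: smD hA _ _ => //; apply: hBA.
have hwA' : w \notin setv b v A'.
  apply/negP=> hwA'; have := proj1 (in_setv _ _ _) hwA'.
  move=> [x [[y [z [hy [hz [hvz ex]]]]] [x0 vx]]].
  apply: (negP hwB); apply/(in_setv v B w).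
  have [z0|z0] := eqVneq z 0.
    by exists y; split => //; rewrite ex z0 addr0 in x0 vx; split.
  case: hvz => [e|hvz]; first by rewrite e eqxx in z0.
  have [y0|y0] := eqVneq y 0.
    by move: vx hvz; rewrite ex y0 add0r; lia.
  have hlt : v x < v (- z) by rewrite vN //; move: vx hvz; lia.
  have nz0 : - z != 0 by rewrite oppr_eq0.
  have [_ e] := vDlt hv x0 nz0 hlt.
  exists y; split => //; split => //; rewrite -vx -e ex; congr v; by rewrite addrK.
have hsetA' : setv b v A' = setv b v A :\ w.
  apply/setP=> u; rewrite in_setD1; apply/idP/idP.
  - move=> hu; apply/andP; split.
      by apply/negP=> /eqP e; rewrite -e hu in hwA'.
    by move/subsetP: (setv_sub b v hA'A) => /(_ _ hu).
  - case/andP=> uw /in_setv [x [hx [x0 vx]]]; apply/in_setv.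
    have [hlt|hge] := ltnP u w.
      have : ~~ P u.
        by apply/negP=> hPu; have := hwmin u hPu; lia.
      rewrite /= negb_and negbK.
      have huA : u \in setv b v A by apply/in_setv; exists x.
      rewrite huA /= => /in_setv [y [hy [y0 vy]]].
      by exists y; split => //; apply: hBA'.
    have hgt : (w < u)%N by rewrite ltn_neqAle hge andbT eq_sym.
    exists x; split => //.
    exists 0, x; split; first exact: sm0 hB.
    split => //; split; last by rewrite add0r.
    by right; rewrite vx; lia.
have hc' : #|setv b v A'| = (#|setv b v B| + n)%N.
  move: hc; rewrite (cardsD1 w (setv b v A)) hwA -hsetA' /= add1n addnS; by case.
have [Ms' [hsm [h0 [hl hst]]]] := IH A' hA' hBA' (fun x hx => hApos x (hA'A x hx)) hc'.
exists (fun i => if (i <= n)%N then Ms' i else A); split.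
  by move=> i; case: ifP.
split; first by [].
split; first by rewrite ltnn.
move=> i hi; have [hin|hin] := ltnP i n.
  by rewrite (ltnW hin); apply: hst.
have ei : i = n by lia.
rewrite ei leqnn; split.
  by move=> x /hl /hA'A.
have [x [hx [x0 vx]]] := (proj1 (in_setv _ _ _) hwA).
exists x; split => //; move/hl => hx'.
by apply: (negP hwA'); apply/(in_setv v A' w); exists x.
Qed.
Lemma card_le_w (b : nat) (w : 'I_b) : #|[set h : 'I_b | (h <= w)%N]| = (nat_of_ord w).+1.
Proof.
have lw : ((nat_of_ord w).+1 <= b)%N by apply: ltn_ord.
have -> : [set h : 'I_b | (h <= w)%N] = [set widen_ord lw j | j in [set: 'I_(nat_of_ord w).+1]].
  apply/setP=> h; rewrite inE; apply/idP/imsetP.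
    by move=> hh; exists (Ordinal (hh : (h < (nat_of_ord w).+1)%N)); [rewrite inE | apply: val_inj].
  by case=> j _ ->; rewrite /= -ltnS ltn_ord.
rewrite card_imset ?cardsT ?card_ord //.
by move=> i j /(congr1 val) /= e; apply: val_inj.
Qed.

Lemma count_refl (b : nat) (H E : {set 'I_b}) (w : 'I_b) : E \subset H ->
  (forall h1 h2 : 'I_b, (h1 + h2)%N = w -> h1 \in H -> h2 \in E -> False) ->
  ((nat_of_ord w).+1 <= (#|H| - #|E|) + 2 * (b - #|H|))%N.
Proof.
move=> hEH hadd.
have hr : forall h : 'I_b, ((nat_of_ord w) - h < b)%N.
  by move=> h; apply: leq_ltn_trans (leq_subr h w) (ltn_ord w).
pose r (h : 'I_b) : 'I_b := Ordinal (hr h).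
pose X := [set h : 'I_b | (h <= w)%N].
pose P := [set h in X | (h \in H) && (r h \in H)].
pose G := ~: H.
pose R := [set h in X | r h \notin H].
have rinj : {in X &, injective r}.
  move=> i j; rewrite !inE => hi hj /(congr1 val) /= e; apply: ord_inj; move: e hi hj; move: (nat_of_ord i) (nat_of_ord j) (nat_of_ord w) => x y z; lia.
have hG : #|G| = (b - #|H|)%N by rewrite /G cardsCs setCK card_ord.
have hX : X \subset P :|: (G :|: R).
  apply/subsetP=> h hX; rewrite !inE; move: hX; rewrite inE => ->.
  by case: (h \in H); case: (r h \in H).
have hR : (#|R| <= #|G|)%N.
  rewrite -(card_in_imset (f := r) (D := R)); last first.
    by move=> i j; rewrite !inE => /andP [hi _] /andP [hj _]; apply: rinj; rewrite inE.
  apply: subset_leq_card; apply/subsetP=> x /imsetP [h]; rewrite !inE => /andP [_ hh] ->.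
  exact: hh.
have hP : (#|P| <= #|H| - #|E|)%N.
  rewrite -(card_in_imset (f := r) (D := P)); last first.
    by move=> i j; rewrite !inE => /andP [hi _] /andP [hj _]; apply: rinj; rewrite inE.
  rewrite -(setIidPr hEH) -cardsD.
  apply: subset_leq_card; apply/subsetP=> x /imsetP [h]; rewrite !inE => /andP [hh /andP [hH hrH]] ->.
  rewrite hrH andbT; apply/negP=> hE; apply: (hadd h (r h)) => //=; lia.
have := subset_leq_card hX; rewrite card_le_w.
have := leq_of_leqif (leq_card_setU P (G :|: R)); have := leq_of_leqif (leq_card_setU G R).
move=> h1 h2 h3; apply: (leq_trans h3); apply: (leq_trans h2).
rewrite mul2n -addnn -hG; apply: leq_add => //.
by apply: (leq_trans h1); apply: leq_add.
Qed.
Lemma conductor (K : fieldType) (S Sb : K -> Prop) : subring S -> quotient_field S ->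
  fin_gen S Sb -> exists D, S D /\ D != 0 /\ forall x, Sb x -> S (D * x).
Proof.
move=> hS hq [k [g hg]].
have step : forall m, exists D, S D /\ D != 0 /\ forall i, (i < m)%N -> S (D * g i).
  elim=> [|m [D [hD [D0 hDg]]]].
    exists 1; split; first by case: hS.
    by split; [exact: oner_neq0| move=> i].
  have [a [b' [ha [hb [b0 e]]]]] := hq (g m).
  exists (D * b'); split; first exact: srM.
  split; first by rewrite mulf_neq0.
  move=> i; rewrite ltnS leq_eqVlt => /orP [/eqP ->|hi].
    by rewrite e -mulrA (mulrCA b') mulfV // mulr1; apply: srM.
  by rewrite mulrAC; apply: srM => //; apply: hDg.
have [D [hD [D0 hDg]]] := step k.
exists D; split => //; split => //.
move=> x /hg [c [hc ->]].
rewrite mulr_sumr; apply: (big_ind S); first exact: sr0.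
  by move=> x1 x2; apply: srD.
move=> i _; rewrite mulrCA; apply: srM => //; last exact: hDg.
exact: hc.
Qed.
Theorem theorem4p8 (K : fieldType) (S n I : K -> Prop) (v : K -> int) (t : K) :
  subring S -> quotient_field S -> noetherian S -> local_with S n ->
  krull_dim_one S -> ~ regular_dim_one S n -> infinite_residue S n ->
  (forall x, integral_over S x <-> x = 0 \/ 0 <= v x) ->
  discrete_valuation v ->
  integral_over S t -> t != 0 -> v t = 1 ->
  fin_gen S (integral_over S) ->
  residue_iso S n (integral_over S) t ->
  n_primary S n I ->
  exists (l d : nat) (m : int),
    has_length S I S l /\ has_length S S (integral_over S) d /\
    is_g I v m /\ m + 1 <= (l%:Z + 2 * d%:Z).
Proof.
move=> hS hq _ hloc _ hnreg _ hI hv _ t0 vt hfg [_ [_ hres]] hprim.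
have hSint : forall s, S s -> integral_over S s.
  move=> s hs; exists 1%N, (fun _ => - s); split => //; split; first by move=> _; apply: srN.
  by rewrite big_ord1 expr1 expr0 mulr1 addrN.
have H : setting S v t.
  split => //.
  - by move=> s /hSint /hI.
  - move=> y /hI hy; have [s [hs [z [hz e]]]] := hres y hy.
    by exists s; split => //; exists z; split => //; apply/hI.
have [[[[hIsub hIS] hI1] hprim2] hrad] := hprim.
have [[[[hnsub hnS] hn1] _] _] := hloc.
have [e [ne e0]] : exists e, n e /\ e != 0.
  apply: NNPP => hno; apply: hnreg; exists 0; split; first exact: sr0.
  move=> y; split.
    move=> hy; exists 0; split; first exact: sr0.
    rewrite mulr0; apply: NNPP => y0; apply: hno; exists y; split => //; exact/eqP.
  by move=> [s [_ ->]]; rewrite mulr0; exact: sm0 hnsub.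
have [k hk] := proj2 (hrad e (hnS e ne)) ne.
pose x0 := e ^+ k.
have x00 : x0 != 0 by apply: expf_neq0.
have [D [hD [D0 hDx]]] := conductor hS hq hfg.
pose b := absz (v (x0 * D)).
have hb : forall x, x != 0 -> b%:Z <= v x -> I x.
  move=> x xn0 hbx.
  have xD0 : x0 * D != 0 by rewrite mulf_neq0.
  have hu : integral_over S (x / (x0 * D)).
    apply/hI; right; rewrite vM ?invr_neq0 // vV //.
    have : v (x0 * D) <= b%:Z by rewrite /b; lia.
    lia.
  have -> : x = (D * (x / (x0 * D))) * x0.
    by field; rewrite x00 D0.
  by apply: smZ hIsub _ hk; apply: hDx.
have hSsub : submodule S S.
  split; first exact: sr0.
  split; [by move=> x y; apply: srD | by move=> s x; apply: srM].
have hVs := Vg_sub 0 H.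
have hSbsub : submodule S (integral_over S).
  case: hVs => h0 [hD' hZ]; split; first by apply/hI; left.
  split; first by move=> x y /hI hx /hI hy; apply/hI; apply: hD'.
  by move=> s x hs /hI hx; apply/hI; apply: hZ.
have hbS : forall x, x != 0 -> b%:Z <= v x -> S x by move=> x x0' hx; apply: hIS; apply: hb.
have hSV : forall x, S x -> Vg v 0 x by move=> x /hSint /hI.
have hSbV : forall x, integral_over S x -> Vg v 0 x by move=> x /hI.
pose cI := #|setv b v I|; pose cS := #|setv b v S|; pose cV := #|setv b v (integral_over S)|.
have cIS : (cI <= cS)%N by apply: subset_leq_card; apply: setv_sub; move=> x hx; exact: (hIS x hx).
have cSV : (cS <= cV)%N by apply: subset_leq_card; apply: setv_sub; exact: hSint.
have cVb : cV = b.
  rewrite /cV -[in RHS](card_ord b) -cardsT.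
  have -> : setv b v (integral_over S) = [set: 'I_b]; last by [].
  apply/setP=> w; rewrite in_setT.
  apply/(in_setv v (integral_over S) w); exists (t ^+ w); split; first by apply/hI; right; rewrite vX.
  by split; [exact: expf_neq0| exact: vX].
exists (cS - cI)%N, (cV - cS)%N.
have hlen1 : has_length S I S (cS - cI).
  split.
    apply: (chain_exists H hIsub hb hSsub (fun x hx => hIS x hx) hSV).
    rewrite -/cS -/cI; lia.
  move=> Ms m hch; have := chain_bound H hb hSV hch; rewrite -/cS -/cI; lia.
have hlen2 : has_length S S (integral_over S) (cV - cS).
  split.
    apply: (chain_exists H hSsub hbS hSbsub hSint hSbV).
    rewrite -/cS -/cV; lia.
  move=> Ms m hch; have := chain_bound H hbS hSbV hch; rewrite -/cS -/cV; lia.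
have key : forall a, a != 0 -> ~ I a -> v a + 1 <= (cS - cI)%N%:Z + 2 * (cV - cS)%N%:Z.
  move=> a a0 haI.
  have [hneg|hpos] := ltP (v a) 0; first by lia.
  have [w [hwa hwE]] : exists w : 'I_b, v a <= (nat_of_ord w)%:Z /\ w \notin setv b v I.
    apply: NNPP => hno; apply: haI.
    apply: (approx (Q := Vg v (v a)) H hIsub hb) => //.
    - move=> x y s hx _ _ x0' _ _ hr; have [->|z0] := eqVneq (x - s * y) 0; first by left.
      case: hr => [e1|hr]; first by rewrite e1 eqxx in z0.
      right; case: hx => [ex|hx]; first by rewrite ex eqxx in x0'.
      move: hx hr; set p := v (x - s * y); set q := v x; lia.
    - move=> x hx x0' hlt.
      have hxa : v a <= v x by case: hx => [ex|//]; rewrite ex eqxx in x0'.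
      have hw : (absz (v x) < b)%N by move: hlt hxa hpos; lia.
      have hin : Ordinal hw \in setv b v I.
        apply: NNPP => hnin; apply: hno; exists (Ordinal hw); split => //=.
          by move: hxa hpos; lia.
        exact/negP.
      have [y [hy [y0 vy]]] := proj1 (in_setv v I (Ordinal hw)) hin.
      exists y; split => //; split => //; rewrite vy /=; move: hxa hpos; lia.
    - move=> x hx x0'; case: hx => [ex|hx]; first by rewrite ex eqxx in x0'.
      by move: hx hpos; lia.
    - by right.
  have hcnt := count_refl (H := setv b v S) (E := setv b v I) (w := w) (setv_sub b v (fun x hx => hIS x hx)).
  have {}hcnt : ((nat_of_ord w).+1 <= (cS - cI) + 2 * (b - cS))%N.
    apply: hcnt => h1 h2 e12 h1S h2I; apply: (negP hwE).
    have [s [hs [s0 vs]]] := proj1 (in_setv v S h1) h1S.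
    have [y [hy [y0 vy]]] := proj1 (in_setv v I h2) h2I.
    apply/(in_setv v I w); exists (s * y); split; first exact: smZ hIsub hs hy.
    split; first by rewrite mulf_neq0.
    by rewrite vM // vs vy -e12.
  rewrite cVb; clearbody cS cI; move: hcnt hwa; lia.
have hbound : forall a (m : nat), a != 0 -> ~ I a -> v a = m%:Z -> (m <= (cS - cI) + 2 * (cV - cS))%N.
  move=> a m a0 haI va; have := key a a0 haI; rewrite va; clearbody cS cI cV; lia.
pose Pm := fun m : nat => pb (exists a, a != 0 /\ ~ I a /\ v a = m%:Z).
have exP : exists m, Pm m.
  exists 0%N; apply/pbP; exists 1; split; first exact: oner_neq0.
  by split => //; rewrite v1.
have ubP : forall m, Pm m -> (m <= (cS - cI) + 2 * (cV - cS))%N.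
  move=> m /pbP [a [a0 [haI va]]]; exact: hbound a m a0 haI va.
case: (ex_maxnP exP ubP) => i /pbP [a [a0 [haI va]]] imax.
exists i%:Z; split => //; split => //; split.
  split; first by exists a.
  move=> a' a'0 ha'I; have [hneg|hpos] := ltP (v a') 0; first lia.
  have : Pm (absz (v a')) by apply/pbP; exists a'; split => //; split => //; lia.
  move/imax; lia.
rewrite -va; exact: key.
Qed.
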